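(* Let $H$ be a Hermitian operator on a $d$-dimensional Hilbert space with spectral decomposition $H=\sum_{i=1}^M\lambda_i\Pi_i$, where $M\ge 2$, $\lambda_M>\cdots>\lambda_1$ are the distinct eigenvalues and $\Pi_i$ the spectral projections. Let $\Delta=\lambda_2-\lambda_1$, $d_G=\operatorname{Tr}[\Pi_1]$, and $\varepsilon\in(0,1)$. If $$\beta=\frac{1}{\Delta}\ln\!\left[\left(\frac{1-\varepsilon}{\varepsilon}\right)\left(\frac{d-d_G}{d_G}\right)\right]$$ and $\beta\ge 0$, then $$\frac{1}{2}\left\|\frac{e^{-\beta H}}{\operatorname{Tr}[e^{-\beta H}]}-\frac{\Pi_1}{\operatorname{Tr}[\Pi_1]}\right\|_1\le\varepsilon.$$
   Context: $\|A\|_1=\operatorname{Tr}[\sqrt{A^\dagger A}]$ is the trace norm. *)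

(* Defs.v *)
From HB Require Import structures.
From mathcomp Require Import all_boot all_order all_algebra.
From mathcomp Require Import complex.
From mathcomp Require Import all_classical all_reals all_analysis.
Set Implicit Arguments. Unset Strict Implicit. Unset Printing Implicit Defensive.
Import Order.TTheory GRing.Theory Num.Theory.
Local Open Scope ring_scope.
Local Open Scope classical_set_scope.
Import numFieldNormedType.Exports.

Section Defs.
Variable R : realType.
Local Notation C := (R[i]).

Definition dagger (m n : nat) (A : 'M[C]_(m, n)) : 'M[C]_(n, m) := (map_mx (@conjc R) A)^T.

Definition herm_mx (d : nat) (A : 'M[C]_d) : Prop := dagger A = A.

Definition psd_mx (d : nat) (S : 'M[C]_d) : Prop :=
  herm_mx S /\ forall v : 'cV[C]_d, 0 <= complex.Re (((dagger v) *m S *m v) 0 0).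

Definition orth_proj (d : nat) (P : 'M[C]_d) : Prop :=
  P *m P = P /\ herm_mx P.

(* the (unique) positive semidefinite square root of a PSD matrix;
   chosen classically, 0 if none exists *)
Definition psd_sqrt (d : nat) (B : 'M[C]_d) : 'M[C]_d :=
  match pselect (exists S : 'M[C]_d, psd_mx S /\ S *m S = B) with
  | left h => sval (cid h)
  | right _ => 0
  end.

Definition trace_norm (d : nat) (A : 'M[C]_d) : R :=
  complex.Re (\tr (psd_sqrt (dagger A *m A))).

Definition is_expm (d : nat) (A E : 'M[C]_d) : Prop :=
  forall i j : 'I_d,
    (fun n : nat => complex.Re ((\sum_(k < n) ((k`!)%:R)^-1 *: (A ^+ k)) i j)) @ \oo
      --> complex.Re (E i j) /\
    (fun n : nat => complex.Im ((\sum_(k < n) ((k`!)%:R)^-1 *: (A ^+ k)) i j)) @ \oo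
      --> complex.Im (E i j).

Definition expm (d : nat) (A : 'M[C]_d) : 'M[C]_d :=
  match pselect (exists E : 'M[C]_d, is_expm A E) with
  | left h => sval (cid h)
  | right _ => 0
  end.

End Defs.

(* Main.v *)
Require Import Defs.
From HB Require Import structures.
From mathcomp Require Import all_boot all_order all_algebra.
From mathcomp Require Import complex.
From mathcomp Require Import all_classical all_reals all_analysis.
From mathcomp Require Import ring lra.
Import Order.TTheory GRing.Theory Num.Theory.
Import numFieldNormedType.Exports.
Local Open Scope ring_scope.

Section Mx.
Local Open Scope classical_set_scope.
Variable R : realType.
Local Notation C := R[i].

Lemma daggerE m n (A : 'M[C]_(m, n)) i j : dagger A i j = ((A j i)^*)%C.
Proof. by rewrite /dagger !mxE. Qed.

Lemma dagger_mul m n p (A : 'M[C]_(m, n)) (B : 'M[C]_(n, p)) :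
  dagger (A *m B) = dagger B *m dagger A.
Proof. by rewrite /dagger map_mxM trmx_mul. Qed.

Lemma tr_hs n (A B : 'M[C]_n) :
  \tr (dagger A *m B) = \sum_j \sum_k ((A k j)^*)%C * B k j.
Proof.
rewrite /mxtrace; apply: eq_bigr => j _; rewrite mxE; apply: eq_bigr => k _.
by rewrite daggerE.
Qed.

Lemma Re_conj_mul (a b : C) : complex.Re ((a^*)%C * b) = complex.Re a * complex.Re b + complex.Im a * complex.Im b.
Proof. case: a => ar ai; case: b => br bi /=. ring. Qed.

Lemma Im_conj_self (a : C) : complex.Im ((a^*)%C * a) = 0.
Proof. case: a => ar ai /=. ring. Qed.

Lemma Re_sum (I : Type) (r : seq I) (F : I -> C) :
  complex.Re (\sum_(i <- r) F i) = \sum_(i <- r) complex.Re (F i).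
Proof. by rewrite raddf_sum. Qed.

Lemma Im_sum (I : Type) (r : seq I) (F : I -> C) :
  complex.Im (\sum_(i <- r) F i) = \sum_(i <- r) complex.Im (F i).
Proof. by rewrite raddf_sum. Qed.

Lemma amgm (t a b : R) : 0 < t -> 2 * (a * b) <= t * a ^+ 2 + b ^+ 2 / t.
Proof.
move=> t0.
have -> : t * a ^+ 2 + b ^+ 2 / t = 2 * (a * b) + (t * a - b) ^+ 2 / t.
  by field; rewrite gt_eqF.
by rewrite lerDl divr_ge0 // ?sqr_ge0 // ltW.
Qed.

Lemma hs_cs n (A B : 'M[C]_n) (t : R) : 0 < t ->
  2 * complex.Re (\tr (dagger A *m B)) <=
  t * complex.Re (\tr (dagger A *m A)) + complex.Re (\tr (dagger B *m B)) / t.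
Proof.
move=> t0; rewrite !tr_hs !Re_sum mulr_sumr mulr_sumr mulr_suml -big_split /=.
apply: ler_sum => j _.
rewrite !Re_sum mulr_sumr mulr_sumr mulr_suml -big_split /=.
apply: ler_sum => k _.
rewrite !Re_conj_mul.
have h1 := @amgm t (complex.Re (A k j)) (complex.Re (B k j)) t0.
have h2 := @amgm t (complex.Im (A k j)) (complex.Im (B k j)) t0.
have -> : t * (complex.Re (A k j) * complex.Re (A k j) + complex.Im (A k j) * complex.Im (A k j)) +
  (complex.Re (B k j) * complex.Re (B k j) + complex.Im (B k j) * complex.Im (B k j)) / t
  = (t * complex.Re (A k j) ^+ 2 + complex.Re (B k j) ^+ 2 / t) + (t * complex.Im (A k j) ^+ 2 + complex.Im (B k j) ^+ 2 / t).
  by rewrite !expr2; ring.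
rewrite mulrDr; exact: lerD.
Qed.


Lemma complex_ext (z w : C) : complex.Re z = complex.Re w -> complex.Im z = complex.Im w -> z = w.
Proof. by case: z => ? ?; case: w => ? ? /= -> ->. Qed.

Lemma Re_realM (x : R) (z : C) : complex.Re ((x%:C)%C * z) = x * complex.Re z.
Proof. case: z => a b /=. ring. Qed.

Lemma Im_realM (x : R) (z : C) : complex.Im ((x%:C)%C * z) = x * complex.Im z.
Proof. case: z => a b /=. ring. Qed.

Section Proj.
Variables (d M : nat) (P : 'I_M -> 'M[C]_d).
Hypothesis Pidem : forall i, P i *m P i = P i.
Hypothesis Pherm : forall i, dagger (P i) = P i.
Hypothesis Porth : forall i j, i != j -> P i *m P j = 0.
Hypothesis Psum : \sum_i P i = 1%:M.

Lemma P_combo (a : 'I_M -> C) i : P i *m (\sum_j a j *: P j) = a i *: P i.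
Proof.
rewrite mulmx_sumr (bigD1 i) //= big1 ?addr0.
  by rewrite -scalemxAr Pidem.
by move=> j ji; rewrite -scalemxAr Porth ?scaler0 // eq_sym.
Qed.

Lemma combo_P (a : 'I_M -> C) i : (\sum_j a j *: P j) *m P i = a i *: P i.
Proof.
rewrite mulmx_suml (bigD1 i) //= big1 ?addr0.
  by rewrite -scalemxAl Pidem.
by move=> j ji; rewrite -scalemxAl Porth ?scaler0.
Qed.

Lemma combo_mul (a b : 'I_M -> C) :
  (\sum_j a j *: P j) *m (\sum_j b j *: P j) = \sum_j (a j * b j) *: P j.
Proof.
rewrite mulmx_suml; apply: eq_bigr => j _.
by rewrite -scalemxAl P_combo scalerA.
Qed.

Lemma one_combo : (1 : 'M[C]_d) = \sum_j 1 *: P j.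
Proof. by rewrite (_ : 1 = 1%:M) // -Psum; apply: eq_bigr => j _; rewrite scale1r. Qed.

Lemma combo_pow (a : 'I_M -> C) k :
  (\sum_j a j *: P j) ^+ k = \sum_j (a j ^+ k) *: P j.
Proof.
elim: k => [|k IH].
  by rewrite expr0 one_combo; apply: eq_bigr => j _; rewrite expr0.
by rewrite exprS IH -mulmxE combo_mul; apply: eq_bigr => j _; rewrite exprS.
Qed.

Lemma combo_entry (a : 'I_M -> C) r s :
  (\sum_j a j *: P j) r s = \sum_j a j * P j r s.
Proof. by rewrite summxE; apply: eq_bigr => j _; rewrite mxE. Qed.

Lemma dagger_combo (x : 'I_M -> R) :
  dagger (\sum_j ((x j)%:C)%C *: P j) = \sum_j ((x j)%:C)%C *: P j.
Proof.
apply/matrixP => r s; rewrite daggerE !combo_entry rmorph_sum /=.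
apply: eq_bigr => j _; rewrite rmorphM /=; congr (_ * _); first by rewrite oppr0.
by rewrite -daggerE Pherm.
Qed.


Lemma Re_tr_combo (x : R) j : complex.Re (\tr (((x%:C)%C) *: P j)) = x * complex.Re (\tr (P j)).
Proof. by rewrite mxtraceZ Re_realM. Qed.

Lemma trP_hs i : \tr (P i) = \tr (dagger (P i) *m P i).
Proof. by rewrite Pherm Pidem. Qed.

Lemma trP_real i : \tr (P i) = ((complex.Re (\tr (P i)))%:C)%C.
Proof.
apply: complex_ext => //=.
rewrite trP_hs tr_hs Im_sum big1 // => j _; rewrite Im_sum big1 // => k _.
exact: Im_conj_self.
Qed.

Lemma trP_pos i : P i != 0 -> 0 < complex.Re (\tr (P i)).
Proof.
move=> nz.
have ge : forall j k, 0 <= complex.Re (((P i k j)^*)%C * P i k j).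
  by move=> j k; rewrite Re_conj_mul addr_ge0 // -expr2 sqr_ge0.
rewrite lt_def; apply/andP; split; last first.
  rewrite trP_hs tr_hs Re_sum sumr_ge0 // => j _; rewrite Re_sum sumr_ge0 //.
apply: contraNneq nz; rewrite trP_hs tr_hs Re_sum => h0.
apply/eqP/matrixP => k j; rewrite mxE.
have ge' : forall j, 0 <= complex.Re (\sum_k ((P i k j)^*)%C * P i k j).
  by move=> j'; rewrite Re_sum sumr_ge0.
have h1 := @psumr_eq0P _ _ _ _ (fun j' _ => ge' j') h0 j isT.
rewrite Re_sum in h1.
have h2 := @psumr_eq0P _ _ _ _ (fun k' _ => ge j k') h1 k isT.
move: h2; rewrite Re_conj_mul -!expr2 => /eqP; rewrite paddr_eq0 ?sqr_ge0 //.
rewrite !sqrf_eq0 => /andP [/eqP h3 /eqP h4].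
by apply: complex_ext.
Qed.

Lemma sum_trP : \sum_j complex.Re (\tr (P j)) = d%:R.
Proof.
rewrite -Re_sum -raddf_sum Psum /=.
have -> : \tr (1%:M : 'M[C]_d) = d%:R by rewrite mxtrace1.
by rewrite raddfMn.
Qed.

Lemma trS_bound (c : 'I_M -> R) (S : 'M[C]_d) : dagger S = S ->
  S *m S = \sum_j ((c j ^+ 2)%:C)%C *: P j -> (forall j, c j != 0) ->
  complex.Re (\tr S) <= \sum_j `|c j| * complex.Re (\tr (P j)).
Proof.
move=> hS hSS cnz.
have eS : \tr S = \sum_j \tr (dagger (P j) *m (S *m P j)).
  rewrite -{1}(mulmx1 S) -Psum mulmx_sumr raddf_sum; apply: eq_bigr => j _.
  by rewrite Pherm [RHS]mxtrace_mulC -mulmxA Pidem.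
rewrite eS Re_sum; apply: ler_sum => j _.
have t0 : 0 < `|c j| by rewrite normr_gt0.
have := @hs_cs _ (P j) (S *m P j) _ t0.
rewrite Pherm Pidem dagger_mul Pherm hS.
have -> : P j *m S *m (S *m P j) = ((c j ^+ 2)%:C)%C *: P j.
  by rewrite mulmxA -(mulmxA (P j)) hSS P_combo -scalemxAl Pidem.
rewrite Re_tr_combo -(real_normK (num_real (c j))).
set a := `|c j|; set D := complex.Re (\tr (P j)); set X := complex.Re _.
have -> : a ^+ 2 * D / a = a * D by field; rewrite gt_eqF.
move=> h; lra.
Qed.


Lemma exp_partial (y : R) :
  (fun n : nat => \sum_(k < n) (k`!%:R)^-1 * y ^+ k) @ \oo --> expR y.
Proof.
have -> : expR y = limn (series (exp_coeff y)).
  by rewrite expRE /pseries exp_coeffE.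
have -> : (fun n : nat => \sum_(k < n) (k`!%:R)^-1 * y ^+ k) = series (exp_coeff y).
  apply/funext => n; rewrite /series /= big_mkord; apply: eq_bigr => k _.
  by rewrite /exp_coeff /= mulrC.
exact: is_cvg_series_exp_coeff.
Qed.

Lemma cvg_fsum (I : finType) (f : I -> nat -> R) (l : I -> R) :
  (forall i, f i @ \oo --> l i) ->
  (fun n => \sum_(i : I) f i n) @ \oo --> \sum_(i : I) l i.
Proof. by move=> H; apply: cvg_big => //; exact: add_continuous. Qed.

Lemma expm_combo (x : 'I_M -> R) :
  expm (\sum_j ((x j)%:C)%C *: P j) = \sum_j ((expR (x j))%:C)%C *: P j.
Proof.
set A := \sum_j _ *: P j; set E := \sum_j _ *: P j.
have ps n : \sum_(k < n) ((k`!)%:R)^-1 *: (A ^+ k) =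
    \sum_j ((\sum_(k < n) (k`!%:R)^-1 * x j ^+ k)%:C)%C *: P j.
  under eq_bigr do rewrite combo_pow scaler_sumr.
  rewrite exchange_big; apply: eq_bigr => j _.
  rewrite rmorph_sum scaler_suml; apply: eq_bigr => k _.
  by rewrite scalerA rmorphM fmorphV rmorph_nat rmorphXn.
have hE : is_expm A E.
  move=> a b; split.
    have -> : (fun n : nat => complex.Re ((\sum_(k < n) ((k`!)%:R)^-1 *: (A ^+ k)) a b))
      = (fun n => \sum_j (\sum_(k < n) (k`!%:R)^-1 * x j ^+ k) * complex.Re (P j a b)).
      apply/funext => n; rewrite ps combo_entry Re_sum; apply: eq_bigr => j _.
      by rewrite Re_realM.
    have -> : complex.Re (E a b) = \sum_j expR (x j) * complex.Re (P j a b).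
      by rewrite combo_entry Re_sum; apply: eq_bigr => j _; rewrite Re_realM.
    apply: cvg_fsum => j; apply: cvgMr_tmp; exact: exp_partial.
  have -> : (fun n : nat => complex.Im ((\sum_(k < n) ((k`!)%:R)^-1 *: (A ^+ k)) a b))
    = (fun n => \sum_j (\sum_(k < n) (k`!%:R)^-1 * x j ^+ k) * complex.Im (P j a b)).
    apply/funext => n; rewrite ps combo_entry Im_sum; apply: eq_bigr => j _.
    by rewrite Im_realM.
  have -> : complex.Im (E a b) = \sum_j expR (x j) * complex.Im (P j a b).
    by rewrite combo_entry Im_sum; apply: eq_bigr => j _; rewrite Im_realM.
  apply: cvg_fsum => j; apply: cvgMr_tmp; exact: exp_partial.
rewrite /expm; case: pselect => [h|nh]; last by exfalso; apply: nh; exists E.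
case: (cid h) => E' hE' /=.
apply/matrixP => a b; apply: complex_ext.
  by have [h1 _] := hE' a b; have [h2 _] := hE a b; exact: (cvg_unique _ h1 h2).
by have [_ h1] := hE' a b; have [_ h2] := hE a b; exact: (cvg_unique _ h1 h2).
Qed.

End Proj.
End Mx.

Lemma final_ineq (R : realType) (eps e0 D0 Y W K : R) : 0 < eps < 1 -> 0 < D0 -> 0 < W -> 0 < e0 -> 0 < Y ->
  K = (1 - eps) / eps * (W / D0) -> Y <= e0 / K * W ->
  (Y / ((e0 * D0 + Y) * D0) * D0 + Y / (e0 * D0 + Y)) / 2 <= eps.
Proof.
move=> /andP [e0' e1] D0p Wp e0p Yp -> hY.
have Zp : 0 < e0 * D0 + Y by rewrite addr_gt0 // mulr_gt0.
have -> : (Y / ((e0 * D0 + Y) * D0) * D0 + Y / (e0 * D0 + Y)) / 2 = Y / (e0 * D0 + Y).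
  by field; rewrite !gt_eqF.
have hh : e0 / ((1 - eps) / eps * (W / D0)) * W = e0 * eps * D0 / (1 - eps).
  by field; rewrite !gt_eqF // subr_gt0.
rewrite hh in hY.
rewrite ler_pdivrMr //.
rewrite ler_pdivlMr ?subr_gt0 // in hY.
nra.
Qed.

Theorem corollary1 (R : realType) (d M : nat) (H : 'M[R[i]]_d)
  (lam : nat -> R) (Pi : nat -> 'M[R[i]]_d) (eps beta : R) :
  herm_mx H ->
  (2 <= M)%N ->
  (forall i j : nat, (i < j < M)%N -> lam i < lam j) ->
  (forall i : nat, (i < M)%N -> orth_proj (Pi i)) ->
  (forall i : nat, (i < M)%N -> Pi i != 0) ->
  (forall i j : nat, (i < M)%N -> (j < M)%N -> i <> j -> Pi i *m Pi j = 0) ->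
  \sum_(i < M) Pi i = 1%:M ->
  H = \sum_(i < M) (lam i)%:C%C *: Pi i ->
  0 < eps < 1 ->
  beta = (lam 1%N - lam 0%N)^-1 *
         ln (((1 - eps) / eps) *
             ((d%:R - complex.Re (\tr (Pi 0%N))) / complex.Re (\tr (Pi 0%N)))) ->
  0 <= beta ->
  let rho := expm ((- beta)%:C%C *: H) in
  let sigma := (\tr rho)^-1 *: rho - (\tr (Pi 0%N))^-1 *: Pi 0%N in
  trace_norm sigma / 2 <= eps.
Proof.
move=> hH; case: M => [|[|m]] // _.
move=> hlam hproj hnz horth hsum hHdef heps hbeta hbeta0; cbv zeta.
set rho := expm _.
set sigma := (_ - _)%R.
pose P := fun i : 'I_m.+2 => Pi i.
have Pidem : forall i, P i *m P i = P i by move=> i; case: (hproj i (ltn_ord i)).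
have Pherm : forall i, dagger (P i) = P i by move=> i; case: (hproj i (ltn_ord i)).
have Porth : forall i j, i != j -> P i *m P j = 0.
  move=> i j ij; apply: horth => // e; move/eqP: ij; apply; exact: val_inj.
have Psum : \sum_i P i = 1%:M by [].
pose e := fun j : 'I_m.+2 => expR (- beta * lam j).
pose D := fun j : 'I_m.+2 => complex.Re (\tr (P j)).
have hrho : rho = \sum_j ((e j)%:C)%C *: P j.
  rewrite /rho hHdef scaler_sumr.
  rewrite (eq_bigr (fun j : 'I_m.+2 => ((- beta * lam j)%:C)%C *: P j)); last first.
    by move=> j _; rewrite scalerA -rmorphM.
  exact: (expm_combo _ _ _ P Pidem Porth Psum).
pose Z := \sum_j e j * D j.
have Dpos j : 0 < D j := trP_pos _ _ _ P Pidem Pherm j (hnz _ (ltn_ord j)).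
have epos j : 0 < e j by apply: expR_gt0.
have etr : \tr rho = (Z%:C)%C.
  rewrite hrho raddf_sum /= rmorph_sum; apply: eq_bigr => j _.
  by rewrite mxtraceZ (trP_real _ _ _ P Pidem Pherm) rmorphM.
have etr0 : \tr (Pi 0%N) = ((D ord0)%:C)%C := trP_real _ _ _ P Pidem Pherm ord0.
pose c := fun j : 'I_m.+2 => e j / Z - (if j == ord0 then (D ord0)^-1 else 0).
have hsig : sigma = \sum_j ((c j)%:C)%C *: P j.
  rewrite /sigma etr etr0 hrho scaler_sumr /c.
  under [RHS]eq_bigr do rewrite rmorphB scalerBl.
  rewrite sumrB; congr (_ - _).
    apply: eq_bigr => j _; rewrite scalerA; congr (_ *: _).
    by rewrite -fmorphV -rmorphM mulrC.
  rewrite (bigD1 ord0) //= big1 ?addr0; first by rewrite fmorphV.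
  by move=> j /negbTE ->; rewrite rmorph0 scale0r.
have hss : dagger sigma *m sigma = \sum_j ((c j ^+ 2)%:C)%C *: P j.
  rewrite hsig (dagger_combo _ _ _ P Pherm) (combo_mul _ _ _ P Pidem Porth).
  by apply: eq_bigr => j _; rewrite -rmorphM expr2.
pose Y := \sum_(j < m.+1) e (lift ord0 j) * D (lift ord0 j).
have hZ : Z = e ord0 * D ord0 + Y by rewrite /Z big_ord_recl.
have Ypos : 0 < Y.
  rewrite /Y big_ord_recl; apply: ltr_wpDr; first by apply: sumr_ge0 => j _; rewrite mulr_ge0 // ltW.
  by rewrite mulr_gt0.
have Zpos : 0 < Z by rewrite hZ addr_gt0 // mulr_gt0.
have c0E : c ord0 = - (Y / (Z * D ord0)).
  rewrite /c eqxx.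
  have -> : e ord0 = (Z - Y) / D ord0.
    by rewrite hZ addrK mulfK // gt_eqF.
  by field; rewrite (gt_eqF Zpos) (gt_eqF (Dpos ord0)).
have cL j : c (lift ord0 j) = e (lift ord0 j) / Z.
  by rewrite /c eq_sym (negbTE (neq_lift ord0 j)) subr0.
have c0neg : c ord0 < 0.
  by rewrite c0E oppr_lt0 divr_gt0 // mulr_gt0.
have cLpos j : 0 < c (lift ord0 j) by rewrite cL divr_gt0.
have cnz j : c j != 0.
  by case: (unliftP ord0 j) => [j'|] ->; [rewrite gt_eqF | rewrite lt_eqF].
have key : complex.Re (\tr (psd_sqrt (dagger sigma *m sigma))) <= \sum_j `|c j| * D j.
  rewrite /psd_sqrt; case: pselect => [h|_]; last first.
    by rewrite linear0 /=; apply: sumr_ge0 => j _; exact: mulr_ge0 (normr_ge0 _) (ltW (Dpos j)).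
  case: (cid h) => S [[hS _] hSS] /=.
  apply: (trS_bound _ _ _ P Pidem Pherm Porth Psum) => //.
  by rewrite hSS hss.
have hD : \sum_(j < m.+1) D (lift ord0 j) = d%:R - D ord0.
  have := sum_trP _ _ _ P Psum; rewrite big_ord_recl => <-.
  by rewrite addrAC subrr add0r.
have Wpos : 0 < d%:R - D ord0.
  rewrite -hD big_ord_recl; apply: ltr_wpDr; last exact: Dpos.
  by apply: sumr_ge0 => j _; rewrite ltW.
pose K := (1 - eps) / eps * ((d%:R - D ord0) / D ord0).
have Kpos : 0 < K.
  case/andP: heps => e0 e1.
  by rewrite /K mulr_gt0 // ?divr_gt0 // subr_gt0.
have hDelta : 0 < lam 1%N - lam 0%N by rewrite subr_gt0; apply: hlam.
have hbK : beta * (lam 1%N - lam 0%N) = ln K.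
  by rewrite hbeta mulrAC mulVf ?mul1r // gt_eqF.
have e1E : e (lift ord0 ord0) = e ord0 / K.
  rewrite /e /= (_ : - beta * lam 1%N = - beta * lam 0%N + - (beta * (lam 1%N - lam 0%N))); last by ring.
  by rewrite expRD hbK expRN lnK // posrE.
have Yle : Y <= e ord0 / K * (d%:R - D ord0).
  rewrite -hD mulr_sumr; apply: ler_sum => j _.
  rewrite -e1E ler_wpM2r //; first by rewrite ltW.
  rewrite /e ler_expR lift0 /=.
  have : lam 1%N <= lam j.+1.
    case: (posnP j) => [->|jp]; first by [].
    by apply/ltW/hlam; rewrite ltnS jp /= ltnS ltn_ord.
  by move=> hl; nra.
rewrite /trace_norm.
apply: (le_trans (ler_wpM2r _ key)); first by [].
rewrite big_ord_recl c0E normrN ger0_norm; last by rewrite divr_ge0 // ltW // mulr_gt0.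
have -> : \sum_(i < m.+1) `|c (lift ord0 i)| * D (lift ord0 i) = Y / Z.
  rewrite /Y mulr_suml; apply: eq_bigr => j _.
  by rewrite cL ger0_norm ?divr_ge0 ?ltW // mulrAC.
rewrite hZ; exact: (@final_ineq _ eps (e ord0) (D ord0) Y (d%:R - D ord0) K heps (Dpos ord0) Wpos (epos ord0) Ypos (erefl K) Yle).
Qed.
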